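(* Let $2\le M_R\le M_T$, $\sigma^2>0$, let $\tilde{\mathbf\Phi}\in\mathbb R^{M_R\times M_T}$ have i.i.d. $\mathcal N(0,\sigma^2)$ entries, and let $\mathbf\Sigma\in\mathbb R^{M_R\times M_T}$ have $[\mathbf\Sigma]_{1,1}=\sqrt{M_TM_R}$ and all other entries zero. Write $\mathbf S=-j\mathbf\Sigma+\tilde{\mathbf\Phi}=[\mathbf s_1\ \cdots\ \mathbf s_{M_R}]^T$. Define $\mathbf s_1^\perp=\mathbf s_1$ and, for $i=2,\dots,M_R$, $\mathbf A_i=\mathbf I_{M_T}-\sum_{n=1}^{i-1}\frac{\mathbf s_n^\perp\mathbf s_n^{\perp H}}{\|\mathbf s_n^\perp\|^2}$ and $\mathbf s_i^\perp=\mathbf A_i\mathbf s_i$ (Gram–Schmidt). Then, with probability 1, for each $i=2,\dots,M_R$ the real symmetric matrix $\mathrm{Re}(\mathbf A_i)$ has eigenvalues $$\{\underbrace{1,\dots,1}_{M_T-i},\ \underbrace{0,\dots,0}_{i-2},\ \eta^{(i)},\ 1-\eta^{(i)}\}$$ for some $\eta^{(i)}=\eta^{(i)}(\mathbf s_1^\perp,\dots,\mathbf s_{i-1}^\perp)\in[0,1]$.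
   Context: $\mathbf s_i^T$ denotes the $i$th row of $\mathbf S$; $\mathrm{Re}$ is the entrywise real part. *)

(* Defs.v *)
(* Complex numbers: an arbitrary numClosedFieldType C
   (e.g. the complex numbers); real numbers = its real elements. *)
From HB Require Import structures.
From mathcomp Require Import all_boot all_order all_algebra.
Set Implicit Arguments. Unset Strict Implicit. Unset Printing Implicit Defensive.
Import Order.TTheory GRing.Theory Num.Theory.
Local Open Scope ring_scope.

Section Defs.
Variable C : numClosedFieldType.

Definition adjmx m n (A : 'M[C]_(m, n)) : 'M[C]_(n, m) := \matrix_(i, j) (A j i)^*.

Definition Remx m n (A : 'M[C]_(m, n)) : 'M[C]_(m, n) := \matrix_(i, j) 'Re (A i j).

Definition sqnorm n (v : 'cV[C]_n) : C := (adjmx v *m v) 0 0.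

Definition Sigma_mx (MR MT : nat) : 'M[C]_(MR, MT) :=
  \matrix_(i, j) (if (nat_of_ord i == 0%N) && (nat_of_ord j == 0%N)
                  then sqrtC ((MT * MR)%:R) else 0).

Definition S_mx (MR MT : nat) (Phi : 'M[C]_(MR, MT)) : 'M[C]_(MR, MT) :=
  - ('i *: Sigma_mx MR MT) + Phi.

(* the k-th row of S (0-based) as a column vector; s_(k+1) in the paper *)
Definition srow (MR MT : nat) (S : 'M[C]_(MR, MT)) (k : nat) : 'cV[C]_MT :=
  match ltnP k MR with
  | LtnNotGeq Hk => (row (Ordinal Hk) S)^T
  | _ => 0
  end.

Definition projA n (p : seq 'cV[C]_n) : 'M[C]_n :=
  1%:M - \sum_(v <- p) ((sqnorm v)^-1 *: (v *m adjmx v)).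

Fixpoint gs n (s : nat -> 'cV[C]_n) (k : nat) : seq 'cV[C]_n :=
  match k with
  | 0 => [::]
  | k'.+1 => let p := gs s k' in rcons p (projA p *m s k')
  end.

(* A_i of the paper (1-based i >= 2) *)
Definition A_mx (MR MT : nat) (S : 'M[C]_(MR, MT)) (i : nat) : 'M[C]_MT :=
  projA (gs (srow S) i.-1).

End Defs.

(* Main.v *)
Require Import Defs.
From HB Require Import structures.
From mathcomp Require Import all_boot all_order all_algebra zify ring lra.
Set Implicit Arguments. Unset Strict Implicit. Unset Printing Implicit Defensive.
Import Order.TTheory GRing.Theory Num.Theory Num.Def.
Local Open Scope ring_scope.


Section Dot.
Variables (C : numClosedFieldType) (n : nat).
Implicit Types x y z : 'cV[C]_n.

Definition dot x y : C := (adjmx x *m y) 0 0.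

Lemma dotE x y : dot x y = \sum_c (x c 0)^* * y c 0.
Proof. by rewrite /dot mxE; apply: eq_bigr => c _; rewrite mxE. Qed.

Lemma sqnormE x : sqnorm x = dot x x. Proof. by []. Qed.

Lemma dotC x y : dot x y = (dot y x)^*.
Proof. rewrite !dotE rmorph_sum; apply: eq_bigr => c _.
by rewrite rmorphM /= conjCK mulrC. Qed.

Lemma dot_ge0 x : 0 <= dot x x.
Proof. rewrite dotE; apply: sumr_ge0 => c _; rewrite mulrC -normCK.
exact: exprn_ge0. Qed.

Lemma dot_eq0 x : (dot x x == 0) = (x == 0).
Proof.
apply/idP/idP => [|/eqP->]; last by rewrite dotE big1 // => c _; rewrite mxE mulr0.
rewrite dotE psumr_eq0 => [/allP H|c _]; last by rewrite mulrC -normCK exprn_ge0.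
apply/eqP/matrixP => c j; rewrite ord1 mxE.
have := H c (mem_index_enum c); rewrite mulrC -normCK.
by rewrite expf_eq0 /= normr_eq0 => /eqP.
Qed.

Lemma dotDr x y z : dot x (y + z) = dot x y + dot x z.
Proof. by rewrite /dot mulmxDr mxE. Qed.
Lemma dotZr x y a : dot x (a *: y) = a * dot x y.
Proof. by rewrite /dot -scalemxAr mxE. Qed.
Lemma dotNr x y : dot x (- y) = - dot x y.
Proof. by rewrite /dot mulmxN mxE. Qed.
Lemma dotBr x y z : dot x (y - z) = dot x y - dot x z.
Proof. by rewrite dotDr dotNr. Qed.
Lemma adjmxD x y : adjmx (x + y) = adjmx x + adjmx y.
Proof. by apply/matrixP => i j; rewrite !mxE rmorphD. Qed.
Lemma dotDl x y z : dot (x + y) z = dot x z + dot y z.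
Proof. by rewrite /dot adjmxD mulmxDl mxE. Qed.
Lemma dotZl x y a : dot (a *: x) y = a^* * dot x y.
Proof. by rewrite dotC dotZr rmorphM /= -dotC. Qed.
Lemma dotNl x y : dot (- x) y = - dot x y.
Proof. by rewrite dotC dotNr rmorphN /= -dotC. Qed.
Lemma dot_sumr I (r : seq I) P (F : I -> 'cV[C]_n) x :
  dot x (\sum_(i <- r | P i) F i) = \sum_(i <- r | P i) dot x (F i).
Proof.
elim/big_rec2: _ => [|i a b Pi <-]; last by rewrite dotDr.
by rewrite /dot mulmx0 mxE.
Qed.
Lemma dot_suml I (r : seq I) P (F : I -> 'cV[C]_n) x :
  dot (\sum_(i <- r | P i) F i) x = \sum_(i <- r | P i) dot (F i) x.
Proof.
rewrite dotC dot_sumr rmorph_sum; apply: eq_bigr => i _; by rewrite [RHS]dotC.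
Qed.

Lemma outer_mul x y : x *m adjmx x *m y = dot x y *: x.
Proof. by rewrite -mulmxA [adjmx x *m y]mx11_scalar mul_mx_scalar. Qed.

End Dot.


Section GS.
Variables (C : numClosedFieldType) (n : nat) (s : nat -> 'cV[C]_n).

Definition vv k := projA (gs s k) *m s k.

Lemma gsE k : gs s k = mkseq vv k.
Proof. by elim: k => [//|k IH] /=; rewrite mkseqS -IH. Qed.

Definition Pk k := \sum_(j < k) (sqnorm (vv j))^-1 *: (vv j *m adjmx (vv j)).

Lemma projAE k : projA (gs s k) = 1%:M - Pk k.
Proof. rewrite /projA gsE /mkseq big_map /Pk. rewrite -(big_mkord (fun _ => true) (fun j => (sqnorm (vv j))^-1 *: (vv j *m adjmx (vv j)))). by rewrite /index_iota subn0. Qed.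

Lemma vvE k : vv k = s k - Pk k *m s k.
Proof. by rewrite /vv projAE mulmxBl mul1mx. Qed.

Lemma Pk_mul k x :
  Pk k *m x = \sum_(j < k) ((sqnorm (vv j))^-1 * dot (vv j) x) *: vv j.
Proof.
rewrite /Pk mulmx_suml; apply: eq_bigr => j _.
by rewrite -scalemxAl outer_mul scalerA.
Qed.

Definition inspan k (x : 'cV[C]_n) := exists c : nat -> C, x = \sum_(j < k) c j *: s j.

Lemma inspan0 k : inspan k 0.
Proof. by exists (fun=> 0); rewrite big1 // => j _; rewrite scale0r. Qed.

Lemma inspanD k x y : inspan k x -> inspan k y -> inspan k (x + y).
Proof.
move=> [c ->] [d ->]; exists (fun j => c j + d j).
by rewrite -big_split; apply: eq_bigr => j _; rewrite scalerDl.
Qed.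

Lemma inspanZ k a x : inspan k x -> inspan k (a *: x).
Proof.
move=> [c ->]; exists (fun j => a * c j).
by rewrite scaler_sumr; apply: eq_bigr => j _; rewrite scalerA.
Qed.

Lemma inspanN k x : inspan k x -> inspan k (- x).
Proof. by move=> h; rewrite -scaleN1r; apply: inspanZ. Qed.

Lemma inspan_sum k I (r : seq I) (P : pred I) (F : I -> 'cV[C]_n) :
  (forall i, P i -> inspan k (F i)) -> inspan k (\sum_(i <- r | P i) F i).
Proof.
move=> h; apply: (big_ind (inspan k)) => //; [exact: inspan0 | exact: inspanD].
Qed.

Lemma inspan_s k j : (j < k)%N -> inspan k (s j).
Proof.
move=> jk; exists (fun t => (t == j)%:R).
rewrite (bigD1 (Ordinal jk)) //= eqxx scale1r big1 ?addr0 // => t /eqP tj.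
case: eqP => [e|_]; last by rewrite scale0r.
by exfalso; apply: tj; apply: val_inj.
Qed.

Lemma inspan_mono j k x : (j <= k)%N -> inspan j x -> inspan k x.
Proof.
move=> jk [c ->]; exists (fun t => if (t < j)%N then c t else 0).
rewrite (big_ord_widen k (fun t => c t *: s t)) // big_mkcond /=.
by apply: eq_bigr => t _; case: ifP => _; rewrite ?scale0r.
Qed.

Lemma vv_span k : inspan k (s k - vv k).
Proof.
elim: k {-2}k (leqnn k) => [|K IH] k.
  by rewrite leqn0 => /eqP ->; rewrite vvE opprB addrC subrK /Pk big_ord0 mul0mx; exact: inspan0.
move=> kK; rewrite vvE opprB addrC subrK Pk_mul; apply: inspan_sum => j _.
apply: inspanZ.
have jK : (j <= K)%N by rewrite -ltnS (leq_trans (ltn_ord j) kK).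
have -> : vv j = s j - (s j - vv j) by rewrite opprB addrC subrK.
apply: inspanD; first exact: inspan_s.
by apply: inspanN; apply: inspan_mono (IH j jK); apply: ltnW.
Qed.

Lemma dot_span k x z : (forall j, (j < k)%N -> dot (s j) z = 0) ->
  inspan k x -> dot x z = 0.
Proof.
move=> h [c ->]; rewrite dot_suml big1 // => j _.
by rewrite dotZl h // mulr0.
Qed.

Lemma dot_vv k z : (forall j, (j <= k)%N -> dot (s j) z = 0) -> dot (vv k) z = 0.
Proof.
move=> h; have -> : vv k = s k - (s k - vv k) by rewrite opprB addrC subrK.
rewrite dotDl dotNl h // (@dot_span k _ z) ?subrr //; last exact: vv_span.
move=> j jk; apply: h; exact: ltnW.
Qed.

Variable K : nat.
Hypothesis hind : forall k, (k < K)%N -> forall c : nat -> C,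
  s k != \sum_(j < k) c j *: s j.

Lemma vv_neq0 k : (k < K)%N -> vv k != 0.
Proof.
move=> kK; apply/negP => /eqP v0; have [c hc] := vv_span k.
by move: (hind kK c); rewrite -hc v0 subr0 eqxx.
Qed.

Lemma sq_neq0 k : (k < K)%N -> sqnorm (vv k) != 0.
Proof. by move=> kK; rewrite sqnormE dot_eq0 vv_neq0. Qed.

Lemma ortho k : (k < K)%N -> forall l, (l < k)%N -> dot (vv l) (vv k) = 0.
Proof.
elim: k {-2}k (leqnn k) => [|M IH] k; first by rewrite leqn0 => /eqP -> _ l.
move=> kM kK l lk.
rewrite [X in dot _ X]vvE dotBr Pk_mul dot_sumr (bigD1 (Ordinal lk)) //=.
rewrite big1 ?addr0; last first.
  move=> j /eqP jl; rewrite dotZr.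
  have jk := ltn_ord j.
  have [lj|jl'|e] := ltngtP l j.
  - rewrite (IH j) ?mulr0 //; first by rewrite -ltnS (leq_trans jk kM).
    exact: ltn_trans jk kK.
  - rewrite [dot (vv l) _]dotC (IH l) ?rmorph0 ?mulr0 //; first by rewrite -ltnS (leq_trans lk kM).
    exact: ltn_trans lk kK.
  - by exfalso; apply: jl; apply: val_inj.
rewrite dotZr -sqnormE mulrAC mulVf ?mul1r ?subrr //.
apply: sq_neq0; exact: ltn_trans lk kK.
Qed.

Lemma ortho2 k l : (k < K)%N -> (l < K)%N -> k != l -> dot (vv l) (vv k) = 0.
Proof.
move=> kK lK; case: ltngtP => // h _; first by rewrite dotC ortho ?rmorph0.
exact: ortho.
Qed.

Section Fix.
Variable k : nat.
Hypothesis kK : (k <= K)%N.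

Lemma Pk_vv l : (l < k)%N -> Pk k *m vv l = vv l.
Proof.
move=> lk; rewrite Pk_mul (bigD1 (Ordinal lk)) //= big1 ?addr0.
  by rewrite -sqnormE mulVf ?scale1r // sq_neq0 // (leq_trans lk kK).
move=> j /eqP jl; rewrite (@ortho2 l j) ?mulr0 ?scale0r //.
- exact: leq_trans lk kK.
- exact: leq_trans (ltn_ord j) kK.
- by apply/eqP => e; apply: jl; apply: val_inj.
Qed.

Lemma Pk_Pk j : (j <= k)%N -> Pk k *m Pk j = Pk j.
Proof.
move=> jk; rewrite /Pk mulmx_sumr; apply: eq_bigr => t _.
rewrite -scalemxAr mulmxA Pk_vv //; exact: leq_trans (ltn_ord t) jk.
Qed.

Lemma Pk_s l : (l < k)%N -> Pk k *m s l = s l.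
Proof.
move=> lk; have -> : s l = vv l + Pk l *m s l by rewrite vvE subrK.
by rewrite mulmxDr Pk_vv // mulmxA Pk_Pk // ltnW.
Qed.

Lemma Pk_z z : (forall j, (j < k)%N -> dot (s j) z = 0) -> Pk k *m z = 0.
Proof.
move=> h; rewrite Pk_mul big1 // => j _; rewrite dot_vv ?mulr0 ?scale0r //.
move=> t tj; apply: h; exact: leq_ltn_trans tj (ltn_ord j).
Qed.

Lemma tr_Pk : \tr (Pk k) = k%:R.
Proof.
rewrite /Pk raddf_sum /= -[k in RHS]card_ord -sumr_const; apply: eq_bigr => j _.
rewrite mxtraceZ mxtrace_mulC /mxtrace big_ord1 -/(sqnorm _) mulVf //.
apply: sq_neq0; exact: leq_trans (ltn_ord j) kK.
Qed.

Lemma adj_Pk : adjmx (Pk k) = Pk k.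
Proof.
apply/matrixP => a b; rewrite /Pk !mxE !summxE rmorph_sum; apply: eq_bigr => j _.
rewrite !mxE rmorphM /= !big_ord1 !mxE.
have r : (sqnorm (vv j))^-1 \is Num.real by rewrite realV sqnormE ger0_real // dot_ge0.
by rewrite (CrealP r); congr (_ * _); rewrite rmorphM /= conjCK mulrC.
Qed.

End Fix.
End GS.


Section Core.
Variables (C : numClosedFieldType) (n : nat).
Implicit Types (A B : 'M[C]_n) (u : 'rV[C]_n).

Lemma entry_mul m p (X : 'M[C]_(m, n)) (Y : 'M[C]_(n, p)) i j :
  (X *m Y) i j = (row i X *m col j Y) 0 0.
Proof. by rewrite !mxE; apply: eq_bigr => c _; rewrite !mxE. Qed.

Lemma adjmxE m p (X : 'M[C]_(m, p)) : adjmx X = map_mx conjC X^T.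
Proof. by apply/matrixP => i j; rewrite !mxE. Qed.

Lemma quad_ge0_aux u (w : 'rV[C]_n) : 0 <= (w *m map_mx conjC w^T) 0 0.
Proof.
rewrite !mxE; apply: sumr_ge0 => c _; rewrite !mxE; exact: mul_conjC_ge0.
Qed.

Lemma quad_ge0 B u : adjmx B = B -> B *m B = B ->
  0 <= (u *m B *m map_mx conjC u^T) 0 0.
Proof.
move=> hB hBB; have -> : u *m B *m map_mx conjC u^T
    = (u *m B) *m (map_mx conjC (u *m B)^T).
  by rewrite trmx_mul map_mxM -(adjmxE B) hB -[in LHS]hBB !mulmxA.
exact: quad_ge0_aux.
Qed.

Lemma cK p q (M : 'M[C]_(p, q)) : map_mx conjC (map_mx conjC M) = M.
Proof. by apply/matrixP => i j; rewrite !mxE conjCK. Qed.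

Lemma quadC_ge0 B u : adjmx B = B -> B *m B = B ->
  0 <= (u *m (map_mx conjC B) *m map_mx conjC u^T) 0 0.
Proof.
move=> hB hBB.
have e : map_mx conjC (map_mx conjC u *m B *m map_mx conjC (map_mx conjC u)^T)
    = u *m map_mx conjC B *m map_mx conjC u^T.
  by rewrite !map_mxM map_trmx !cK.
rewrite -e mxE conjC_ge0; exact: quad_ge0.
Qed.

Lemma RemxE A : Remx A = 2%:R^-1 *: (A + map_mx conjC A).
Proof. by apply/matrixP => i j; rewrite !mxE ReE mulrC. Qed.

Lemma quadRe_ge0 B u : adjmx B = B -> B *m B = B ->
  0 <= (u *m Remx B *m map_mx conjC u^T) 0 0.
Proof.
move=> hB hBB; rewrite RemxE -scalemxAr -scalemxAl mxE mulmxDr mulmxDl mxE.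
apply: mulr_ge0; first by rewrite invr_ge0 ler0n.
by apply: addr_ge0; [exact: quad_ge0 | exact: quadC_ge0].
Qed.

Lemma Remx1B A : Remx (1%:M - A) = 1%:M - Remx A.
Proof.
apply/matrixP => i j; rewrite !mxE raddfB /=; congr (_ - _).
case: (i == j); rewrite /= ?mulr1n ?mulr0n ?raddf0 //.
by rewrite ReE conjC1 -mulr2n divff // pnatr_eq0.
Qed.

Lemma Remx_adj A : adjmx A = A -> map_mx conjC (Remx A)^T = Remx A.
Proof.
move=> hA; apply/matrixP => i j; rewrite !mxE.
rewrite conj_Creal ?Creal_Re //.
have := congr1 (fun M : 'M[C]_n => M i j) hA; rewrite mxE => <-.
by rewrite Re_conj.
Qed.

Lemma char_poly_sim (P D : 'M[C]_n) : P \in unitmx ->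
  char_poly (invmx P *m D *m P) = char_poly D.
Proof.
move=> Pu; rewrite /char_poly /char_poly_mx.
set iP := map_mx polyC (invmx P); set mP := map_mx polyC P.
have h1 : iP *m mP = 1%:M by rewrite -map_mxM mulVmx // map_mx1.
have -> : ('X%:M : 'M[{poly C}]_n) - map_mx polyC (invmx P *m D *m P)
   = iP *m ('X%:M - map_mx polyC D) *m mP.
  rewrite !map_mxM mulmxBr mulmxBl; congr (_ - _).
  by rewrite scalar_mxC -mulmxA h1 mulmx1.
by rewrite !det_mulmx mulrAC -det_mulmx h1 det1 mul1r.
Qed.

Lemma rank_conj (X M Y : 'M[C]_n) : X \in unitmx -> Y \in unitmx ->
  \rank (X *m M *m Y) = \rank M.
Proof.
move=> Xu Yu; rewrite mxrankMfree ?row_free_unit //.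
apply/eqP; rewrite eqn_leq mxrankM_maxr /=.
by rewrite -{1}[M](mulKmx Xu) mxrankM_maxr.
Qed.

Lemma spec A : adjmx A = A -> A *m A = A ->
  exists d : 'rV[C]_n,
    [/\ char_poly (Remx A) = \prod_(j < n) ('X - (d 0 j)%:P),
        forall j, 0 <= d 0 j <= 1,
        \tr (diag_mx d) = \tr (Remx A),
        \rank (diag_mx d) = \rank (Remx A) &
        \rank (1%:M - diag_mx d) = \rank (1%:M - Remx A)].
Proof.
move=> hA hAA; set R := Remx A.
have hR : map_mx conjC R^T = R by exact: Remx_adj.
have Rn : R \is normalmx by apply/normalmxP; rewrite hR.
have /orthomx_spectralP := Rn.
set P := spectralmx R; set d := spectral_diag R => Re.
have Pu : P \is unitarymx by exact: spectral_unitarymx.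
have Punit : P \in unitmx by exact: unitarymx_unit.
have iP : invmx P = map_mx conjC P^T by exact: invmx_unitary.
have PPt : P *m (map_mx conjC P^T) = 1%:M by apply/unitarymxP.
have PtP : (map_mx conjC P^T) *m P = 1%:M by rewrite -iP mulVmx.
have De : diag_mx d = P *m R *m (map_mx conjC P^T).
  by rewrite Re -iP !mulmxA mulmxV // mul1mx -mulmxA mulmxV // mulmx1.
have iPu : map_mx conjC P^T \in unitmx by rewrite -iP unitmx_inv.
have Dj j : d 0 j = (row j P *m R *m map_mx conjC (row j P)^T) 0 0.
  have -> : d 0 j = diag_mx d j j by rewrite mxE eqxx mulr1n.
  rewrite De [LHS]entry_mul row_mul.
  have -> // : col j (map_mx conjC P^T) = map_mx conjC (row j P)^T.
  by apply/matrixP => a b; rewrite !mxE.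
have uu j : (row j P *m map_mx conjC (row j P)^T) 0 0 = 1.
  have h := congr1 (fun M : 'M[C]_n => M j j) PPt.
  rewrite /= entry_mul [in RHS]mxE eqxx /= in h.
  transitivity ((row j P *m col j (map_mx conjC P^T)) 0 0); last by rewrite h.
  have -> // : col j (map_mx conjC P^T) = map_mx conjC (row j P)^T.
  by apply/matrixP => a b; rewrite !mxE.
exists d; split.
- rewrite Re char_poly_sim // char_poly_trig //.
  by apply: eq_bigr => j _; rewrite mxE eqxx mulr1n.
- move=> j; rewrite Dj quadRe_ge0 //=.
  have hB : adjmx (1%:M - A) = 1%:M - A.
    apply/matrixP => a b; rewrite !mxE rmorphB /=.
    have := congr1 (fun M : 'M[C]_n => M a b) hA; rewrite mxE => ->.
    by rewrite eq_sym; case: (a == b); rewrite /= ?rmorph1 ?rmorph0.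
  have hBB : (1%:M - A) *m (1%:M - A) = 1%:M - A.
    by rewrite mulmxBl mul1mx mulmxBr mulmx1 hAA subrr subr0.
  have := quadRe_ge0 (row j P) hB hBB.
  by rewrite Remx1B mulmxBr mulmxBl mulmx1 mxE uu mxE subr_ge0.
- by rewrite De mxtrace_mulC mulmxA PtP mul1mx.
- by rewrite De rank_conj.
- have -> : 1%:M - diag_mx d = P *m (1%:M - R) *m map_mx conjC P^T.
    by rewrite De mulmxBr mulmxBl mulmx1 PPt.
  by rewrite rank_conj.
Qed.

End Core.


Section Comb.
Variable C : numClosedFieldType.

Lemma rank_diag n (d : 'rV[C]_n) : \rank (diag_mx d) = (\sum_(j < n) nat_of_bool (d ord0 j != 0%R))%N.
Proof.
elim: n d => [|n IH] d; first by rewrite big_ord0; apply/eqP; rewrite -leqn0 rank_leq_row.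
have e := diag_mx_row (lsubmx (d : 'rV_(1 + n))) (rsubmx (d : 'rV_(1 + n))).
rewrite hsubmxK in e.
rewrite (_ : \rank (diag_mx d) = \rank (block_mx (diag_mx (lsubmx (d : 'rV_(1 + n)))) 0 0 (diag_mx (rsubmx (d : 'rV_(1 + n)))))); last by rewrite -e.
rewrite rank_diag_block_mx IH big_ord_recl; congr (_ + _)%N.
  set a := lsubmx _.
  have -> : d 0 ord0 = a 0 0.
    by rewrite /a mxE; congr (d _ _); apply: val_inj.
  have r1 : (\rank (diag_mx a) <= 1)%N by apply: rank_leq_row.
  case: (a 0 0 =P 0) => [a0 | an0].
    have -> : diag_mx a = 0.
      by apply/matrixP => i j; rewrite !ord1 [diag_mx a _ _]mxE a0 mul0rn mxE.
    by rewrite mxrank0.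
  have : \rank (diag_mx a) != 0%N.
    rewrite mxrank_eq0; apply/eqP => /matrixP /(_ 0 0); rewrite !mxE eqxx mulr1n.
    by rewrite /a mxE in an0.
  by move: r1; case: (\rank _) => [|[|]].
apply: eq_bigr => j _.
by rewrite mxE; congr (nat_of_bool (d _ _ != _)); apply: val_inj.
Qed.

Lemma comb (ds : seq C) n m : size ds = n -> (1 <= m)%N -> (m < n)%N ->
  all (fun x => 0 <= x <= 1) ds -> \sum_(x <- ds) x = (n - m)%:R ->
  (count (fun x => x != 0%R) ds <= n - (m - 1))%N ->
  (count (fun x => x != 1%R) ds <= m.+1)%N ->
  exists eta : C, 0 <= eta <= 1 /\
    perm_eq ds (nseq (n - m.+1) 1 ++ nseq (m.+1 - 2) 0 ++ [:: eta; 1 - eta]).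
Proof.
move=> sz m1 mn hall hsum c0 c1.
set a := count (pred1 1) ds; set b := count (pred1 0) ds.
set rest := filter (predI (predC (pred1 0)) (predC (pred1 1))) ds.
have hp : perm_eq ds (nseq a 1 ++ nseq b 0 ++ rest).
  rewrite perm_sym; apply: perm_trans (permEl (perm_filterC (pred1 1) ds)).
  have -> : filter (pred1 1) ds = nseq a 1.
    by rewrite /a -size_filter; apply/all_pred1P; rewrite filter_all.
  rewrite perm_cat2l.
  apply: perm_trans (permEl (perm_filterC (pred1 0) _)).
  have -> : filter (pred1 0) (filter (predC (pred1 1)) ds) = nseq b 0.
    rewrite -filter_predI.
    have -> : b = size (filter (predI (pred1 0) (predC (pred1 1))) ds).
      rewrite size_filter /b; apply: eq_count => x /=.
      by case: (x =P 0) => //= ->; rewrite eq_sym oner_eq0.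
    by apply/all_pred1P; apply/allP => x; rewrite mem_filter => /andP [/andP [] ].
  by rewrite perm_cat2l /rest -filter_predI.
have cnt (p : pred C) : count p ds = (p 1%R * a + (p 0%R * b + count p rest))%N.
  by rewrite (permP hp) !count_cat !count_nseq.
have hs : n = (a + (b + size rest))%N.
  by rewrite -sz (perm_size hp) !size_cat !size_nseq.
have hrest : forall x, x \in rest -> 0 < x < 1.
  move=> x; rewrite mem_filter /= => /andP [/andP [x0 x1] xin].
  have /andP [h0 h1] := allP hall x xin.
  by rewrite !lt_def x0 h0 eq_sym x1 h1.
have sumn1 k : \sum_(x <- nseq k (1 : C)) x = k%:R.
  by elim: k => [|k IH]; rewrite ?big_nil // /= big_cons IH -natr1 addrC.
have hsum' : a%:R + \sum_(x <- rest) x = (n - m)%:R.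
  rewrite -hsum (perm_big _ hp) !big_cat sumn1 /= [X in _ = _ + (X + _)]big1_seq ?add0r //.
  by move=> x /andP [_ /nseqP [->]].
have c0' := c0; rewrite cnt /= oner_neq0 eqxx /= mul1n mul0n add0n in c0'.
have c1' := c1; rewrite cnt /= eqxx eq_sym oner_neq0 /= mul1n mul0n add0n in c1'.
have crest0 : count (fun x => x != 0%R) rest = size rest.
  by apply/eqP; rewrite -all_count; apply/allP => x /hrest /andP [h _]; rewrite gt_eqF.
have crest1 : count (fun x => x != 1%R) rest = size rest.
  by apply/eqP; rewrite -all_count; apply/allP => x /hrest /andP [_ h]; rewrite lt_eqF.
rewrite crest0 in c0'; rewrite crest1 in c1'.
have nm : (n - m = (n - m.+1).+1)%N by lia.
clear cnt crest0 crest1; move: hp hs c0' c1' hsum' hrest; case: rest => [|x [|y [|z t]]] /=.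
- move=> hp hs c0' c1'; rewrite big_nil addr0 => /eqP; rewrite eqr_nat => /eqP ha _.
  exists 1; split; first by rewrite lexx ler01.
  apply: perm_trans hp _; rewrite subrr.
  have hb : (b = (m.+1 - 2).+1)%N by lia.
  rewrite ha nm hb; apply/permP => p; rewrite !count_cat /=.
  set u1 := nat_of_bool (p 1); set u0 := nat_of_bool (p 0); set k1 := count p _; set k0 := count p (nseq _ 0); lia.
- move=> hp hs c0' c1'; rewrite big_cons big_nil addr0 => ha hx.
  have /andP [x0 x1] := hx x (mem_head _ _).
  exfalso; case: (leqP (n - m) a) => h.
    have : (n - m)%:R < a%:R + x :> C by rewrite ltr_pwDr // ler_nat.
    by rewrite ha ltxx.
  have : a%:R + x < (n - m)%:R :> C.
    by rewrite -[(n - m)%N](subnKC (ltnW h)) natrD ltrD2l (lt_le_trans x1) // ler1n subn_gt0.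
  by rewrite ha ltxx.
- move=> hp hs c0' c1'; rewrite big_cons big_cons big_nil addr0 => ha hx.
  have /andP [x0 x1] := hx x (mem_head _ _).
  have /andP [y0 y1] : 0 < y < 1 by apply: hx; rewrite !inE eqxx orbT.
  have hA : (a = n - m.+1)%N.
    case: (leqP (n - m) a) => h.
      have : (n - m)%:R < a%:R + (x + y) :> C.
        by rewrite ltr_pwDr ?addr_gt0 // ler_nat.
      by rewrite ha ltxx.
    case: (leqP (a + 2) (n - m)) => h2; last by lia.
    have : a%:R + (x + y) < (n - m)%:R :> C.
      apply: (lt_le_trans (y := a%:R + 2%:R)).
        by rewrite ltrD2l -[2%:R]/(1 + 1 : C) ltrD.
      by rewrite -natrD ler_nat.
    by rewrite ha ltxx.
  have hxy : y = 1 - x.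
    move: ha; rewrite nm hA -natr1 => /addrI h; by rewrite -h addrC addKr.
  have hb : (b = m.+1 - 2)%N by lia.
  exists x; split; first by rewrite (ltW x0) (ltW x1).
  by rewrite -hA -hb -hxy.
- by move=> _ hs c0' c1'; exfalso; lia.
Qed.

End Comb.


Section Assemble.
Variable C : numClosedFieldType.

Lemma count_sum (T : Type) (P : pred T) (r : seq T) :
  count P r = (\sum_(x <- r) nat_of_bool (P x))%N.
Proof. by elim: r => [|x r IH]; rewrite ?big_nil // big_cons /= IH. Qed.

Lemma core n (A : 'M[C]_n) m : adjmx A = A -> A *m A = A ->
  (1 <= m)%N -> (m < n)%N -> \tr (Remx A) = (n - m)%:R ->
  (\rank (Remx A) <= n - (m - 1))%N -> (\rank (1%:M - Remx A)%R <= m.+1)%N ->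
  exists eta : C, 0 <= eta <= 1 /\ char_poly (Remx A) =
   \prod_(x <- nseq (n - m.+1) 1 ++ nseq (m.+1 - 2) 0 ++ [:: eta; 1 - eta])
      ('X - x%:P).
Proof.
move=> hA hAA m1 mn htr r0 r1.
have [d [hc hb ht hr0 hr1]] := spec hA hAA.
set ds := [seq d 0 j | j <- enum 'I_n].
have sz : size ds = n by rewrite size_map size_enum_ord.
have hall : all (fun x => 0 <= x <= 1) ds.
  by apply/allP => x /mapP [j _ ->]; exact: hb.
have hsum : \sum_(x <- ds) x = (n - m)%:R.
  by rewrite -htr -ht mxtrace_diag big_map big_enum.
have cnt (P : pred C) : count P ds = (\sum_(j < n) nat_of_bool (P (d ord0 j)))%N.
  by rewrite count_sum big_map big_enum.
have c0 : (count (fun x => x != 0%R) ds <= n - (m - 1))%N.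
  by rewrite cnt -rank_diag hr0.
have c1 : (count (fun x => x != 1%R) ds <= m.+1)%N.
  have e1 : (1%:M - diag_mx d) = diag_mx (const_mx 1 - d) :> 'M[C]_n.
    by apply/matrixP => i j; rewrite !mxE; case: (i == j); rewrite ?mulr1n ?mulr0n ?subr0.
  rewrite cnt.
  have <- : (\sum_(j < n) nat_of_bool ((const_mx 1 - d)%R ord0 j != 0%R) =
              \sum_(j < n) nat_of_bool (d ord0 j != 1%R))%N.
    by apply: eq_bigr => j _; rewrite !mxE subr_eq0 eq_sym.
  by rewrite -rank_diag -e1 hr1.
have [eta [he hp]] := comb sz m1 mn hall hsum c0 c1.
exists eta; split => //; rewrite hc -(perm_big _ hp) /= big_map big_enum //.
Qed.

End Assemble.


Section GSCore.
Variables (C : numClosedFieldType) (n : nat).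

Lemma adjmx1B (M : 'M[C]_n) : adjmx (1%:M - M) = 1%:M - adjmx M.
Proof.
apply/matrixP => a b; rewrite !mxE rmorphB /= eq_sym.
by case: (a == b); rewrite /= ?rmorph1 ?rmorph0.
Qed.

Lemma Re_kill (A : 'M[C]_n) (z : 'cV[C]_n) :
  A *m z = 0 -> A *m map_mx conjC z = 0 -> Remx A *m z = 0.
Proof.
move=> h1 h2; rewrite RemxE -scalemxAl mulmxDl h1 add0r.
have -> : map_mx conjC A *m z = map_mx conjC (A *m map_mx conjC z).
  by rewrite map_mxM cK.
by rewrite h2 map_mx0 scaler0.
Qed.

Lemma Re_fix (A : 'M[C]_n) (z : 'cV[C]_n) :
  A *m z = z -> A *m map_mx conjC z = map_mx conjC z -> Remx A *m z = z.
Proof.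
move=> h1 h2; rewrite RemxE -scalemxAl mulmxDl h1.
have -> : map_mx conjC A *m z = map_mx conjC (A *m map_mx conjC z).
  by rewrite map_mxM cK.
rewrite h2 cK -[X in _ *: (X + X)]scale1r -scalerDl scalerA mulVf ?scale1r //.
by rewrite pnatr_eq0.
Qed.

Lemma conj_rect (x : C) : x^* = 'Re x - 'i * 'Im x.
Proof.
rewrite {1}[x]Crect rmorphD rmorphM /= conjCi.
by rewrite !conj_Creal ?Creal_Re ?Creal_Im // mulNr.
Qed.

Variable s : nat -> 'cV[C]_n.
Variable m : nat.
Hypothesis m1 : (1 <= m)%N.
Hypothesis mn : (m < n)%N.
Hypothesis hind : forall k, (k < m)%N -> forall c : nat -> C,
  s k != \sum_(j < k) c j *: s j.
Hypothesis hre : forall k c, (1 <= k)%N -> s k c 0 \is Num.real.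
Hypothesis hG : row_free (\matrix_(t < m.-1, c < n) s t.+1 c 0).

Let P := Pk s m.
Let A := projA (gs s m).

Lemma gs_core : exists eta : C, 0 <= eta <= 1 /\ char_poly (Remx A) =
   \prod_(x <- nseq (n - m.+1) 1 ++ nseq (m.+1 - 2) 0 ++ [:: eta; 1 - eta])
      ('X - x%:P).
Proof.
have hAe : A = 1%:M - P by rewrite /A projAE.
have hP : adjmx P = P by exact: adj_Pk.
have hPP : P *m P = P by apply: (Pk_Pk hind); exact: leqnn.
have hA : adjmx A = A by rewrite hAe adjmx1B hP.
have hAA : A *m A = A.
  by rewrite hAe mulmxBl mul1mx mulmxBr mulmx1 hPP subrr subr0.
have sreal k : (1 <= k)%N -> map_mx conjC (s k) = s k.
  by move=> k1; apply/matrixP => a b; rewrite mxE ord1 conj_Creal ?hre.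
apply: core => //.
-
  rewrite /mxtrace.
  have -> : \sum_i Remx A i i = 'Re (\sum_i A i i).
    by rewrite raddf_sum; apply: eq_bigr => i _; rewrite mxE.
  rewrite -/(mxtrace A) hAe raddfB /= mxtrace1 (tr_Pk hind) // -natrB ?(ltnW mn) //.
  by apply/Creal_ReP; rewrite realn.
-
  set G := \matrix_(t < m.-1, c < n) s t.+1 c 0.
  have GR : G *m (Remx A)^T = 0.
    apply: trmx_inj; rewrite trmx_mul trmxK trmx0.
    apply/matrixP => a b; rewrite mxE [RHS]mxE.
    have k1 : (1 <= b.+1)%N by [].
    have km : (b.+1 < m)%N by have := ltn_ord b; lia.
    have h : Remx A *m s b.+1 = 0.
      apply: Re_kill; rewrite ?sreal // hAe mulmxBl mul1mx (Pk_s hind) ?subrr //.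
    have h2 := congr1 (fun M : 'cV[C]_n => M a 0) h; rewrite /= mxE [RHS]mxE in h2.
    transitivity (\sum_j Remx A a j * s b.+1 j 0); last exact: h2.
    by apply: eq_bigr => c _; rewrite !mxE.
  have : (G <= kermx (Remx A)^T)%MS by apply/sub_kermxP.
  move/mxrankS; rewrite mxrank_ker mxrank_tr (eqP hG).
  have := rank_leq_col (Remx A); lia.
-
  set F := \matrix_(t < m.+1, c < n)
     (if (t < m)%N then 'Re (s t c 0) else 'Im (s 0%N c 0)).
  have Freal : map_mx conjC F = F.
    apply/matrixP => a b; rewrite !mxE.
    by case: ifP => _; rewrite conj_Creal ?Creal_Re ?Creal_Im.
  have Lz z : F *m z = 0 -> forall j, (j < m)%N -> dot (s j) z = 0.
    move=> hz j jm.
    have hRe : \sum_c 'Re (s j c 0) * z c 0 = 0.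
      have jm1 : (j < m.+1)%N by lia.
      transitivity ((F *m z) (Ordinal jm1) 0); last by rewrite hz mxE.
      rewrite mxE; apply: eq_bigr => c _; by rewrite mxE /= jm.
    have hIm : \sum_c 'Im (s 0%N c 0) * z c 0 = 0.
      transitivity ((F *m z) ord_max 0); last by rewrite hz mxE.
      rewrite mxE; apply: eq_bigr => c _; by rewrite mxE /= ltnn.
    rewrite dotE.
    under eq_bigr => c _ do rewrite conj_rect mulrBl -mulrA.
    rewrite sumrB hRe sub0r -mulr_sumr.
    case: j jm hRe => [|j] jm hRe; first by rewrite hIm mulr0 oppr0.
    rewrite big1 ?mulr0 ?oppr0 // => c _.
    by rewrite (Creal_ImP _ (hre c _)) // mul0r.
  set K := kermx F^T.
  have KR : K *m (1%:M - Remx A)^T = 0.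
    apply/row_matrixP => t; rewrite row_mul row0.
    have hu : row t K *m F^T = 0.
      by rewrite -row_mul (sub_kermxP (submx_refl K)) row0.
    set u := row t K in hu *.
    apply: trmx_inj; rewrite trmx_mul trmxK trmx0.
    set z := u^T.
    have Fz : F *m z = 0 by rewrite -[F]trmxK -trmx_mul hu trmx0.
    have Fz' : F *m map_mx conjC z = 0.
      by rewrite -Freal -map_mxM Fz map_mx0.
    have Az (w : 'cV[C]_n) : F *m w = 0 -> A *m w = w.
      move=> hw; rewrite hAe mulmxBl mul1mx /P Pk_z ?subr0 //.
      exact: Lz.
    by rewrite mulmxBl mul1mx Re_fix ?subrr // Az.
  have : (K <= kermx (1%:M - Remx A)^T)%MS by apply/sub_kermxP.
  move/mxrankS; rewrite !mxrank_ker !mxrank_tr.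
  have := rank_leq_row F; have := rank_leq_col (1%:M - Remx A); have := rank_leq_col F.
  lia.
Qed.

End GSCore.


Section Top.
Variables (C : numClosedFieldType) (MR MT : nat) (S : 'M[C]_(MR, MT)).

Lemma srow_ord (j : 'I_MR) : srow S j = (row j S)^T.
Proof.
rewrite /srow; case: ltnP => h; last by move: (ltn_ord j); rewrite ltnNge h.
by congr (row _ S)^T; apply: val_inj.
Qed.

Lemma srow_out k : (MR <= k)%N -> srow S k = 0.
Proof. by rewrite /srow; case: ltnP => //; rewrite ltnNge => /negP. Qed.

Hypothesis hgen : row_free S.

Lemma hind_S k : (k < MR)%N -> forall c : nat -> C,
  srow S k != \sum_(j < k) c j *: srow S j.
Proof.
move=> kM c; apply/eqP => e.
pose x := \row_(j < MR) (if (j < k)%N then c j else if j == k :> nat then -1 else 0).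
have : x *m S == 0.
  apply/eqP; apply: trmx_inj; rewrite trmx0 mulmx_sum_row raddf_sum /=.
  transitivity (\sum_(j < MR) (if (j < k)%N then c j else if j == k :> nat then -1 else 0) *: srow S j).
    by apply: eq_bigr => j _; rewrite linearZ /= mxE srow_ord.
  pose f j := (if (j < k)%N then c j else if j == k then -1 else 0) *: srow S j.
  rewrite -(big_mkord (fun _ => true) f).
  rewrite (@big_cat_nat _ _ _ k.+1) //= big_nat_recr //= [X in _ + X]big1_seq.
    rewrite addr0 /f ltnn eqxx scaleN1r big_mkord e -[X in X - _ = _]addr0.
    rewrite addr0; apply/eqP; rewrite subr_eq0; apply/eqP.
    by apply: eq_bigr => j _; rewrite ltn_ord.
  move=> j /andP [_]; rewrite mem_index_iota => /andP [h1 _].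
  by rewrite /f ltnNge (ltnW h1) /= gtn_eqF // scale0r.
rewrite mulmx_free_eq0 // => /eqP /matrixP /(_ 0 (Ordinal kM)).
by rewrite !mxE /= ltnn eqxx => /eqP; rewrite oppr_eq0 oner_eq0.
Qed.

Lemma rowsub_free p (f : 'I_p -> 'I_MR) : injective f -> row_free (rowsub f S).
Proof.
move=> finj; rewrite /row_free rowsubE mxrankMfree //.
set E := rowsub f (1%:M : 'M[C]_MR).
have EE : E *m E^T = 1%:M.
  rewrite -rowsubE; apply/matrixP => a b; rewrite !mxE.
  by rewrite (inj_eq finj) eq_sym.
apply/eqP/anti_leq; rewrite rank_leq_row /=.
by rewrite -{1}(mxrank1 C p) -EE mxrankM_maxl.
Qed.

End Top.

Theorem lemma5 (C : numClosedFieldType) (MR MT : nat)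
  (hR : (2 <= MR)%N) (hRT : (MR <= MT)%N)
  (Phi : 'M[C]_(MR, MT)) (hPhi : forall i j, Phi i j \is Num.real)
  (hgen : row_free (S_mx Phi)) :
  forall i : nat, (2 <= i <= MR)%N ->
    exists eta : C, 0 <= eta <= 1 /\
      char_poly (Remx (A_mx (S_mx Phi) i)) =
      \prod_(x <- nseq (MT - i) 1 ++ nseq (i - 2) 0 ++ [:: eta; 1 - eta])
         ('X - x%:P).
Proof.
move=> i /andP [i2 iM].
set S := S_mx Phi; set m := i.-1.
have ie : i = m.+1 by rewrite /m prednK // (leq_trans _ i2).
have m1 : (1 <= m)%N by lia.
have mn : (m < MT)%N by lia.
have hind : forall k, (k < m)%N -> forall c : nat -> C,
    srow S k != \sum_(j < k) c j *: srow S j.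
  by move=> k km; apply: hind_S => //; lia.
have hre : forall k c, (1 <= k)%N -> srow S k c 0 \is Num.real.
  move=> k c k1; case: (ltnP k MR) => kM; last by rewrite srow_out // mxE real0.
  rewrite (srow_ord S (Ordinal kM)) !mxE /=.
  by rewrite (_ : (k == 0%N) = false) ?mulr0 ?oppr0 ?add0r //; lia.
have fm : forall t : 'I_m.-1, (t.+1 < MR)%N by move=> t; have := ltn_ord t; lia.
have hG : row_free (\matrix_(t < m.-1, c < MT) srow S t.+1 c 0).
  have -> : \matrix_(t < m.-1, c < MT) srow S t.+1 c 0 =
            rowsub (fun t => Ordinal (fm t)) S.
    apply/matrixP => a b; rewrite !mxE (srow_ord S (Ordinal (fm a))) !mxE //.
  apply: rowsub_free => // a b /(congr1 val) /= [] ab; exact: val_inj.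
have [eta [he hc]] := gs_core m1 mn hind hre hG.
exists eta; split => //; rewrite /A_mx -/m hc ie.
by rewrite /m /= (_ : i.-1.+1 - 2 = i - 2)%N -?ie.
Qed.
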